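(* Let $h=h_{\mathbb{B}^n}$ be the Hilbert distance in the unit ball $\mathbb{B}^n\subset\mathbb{R}^n$, let $c\in\mathbb{B}^n$ and $R>0$, and let $S_h(c,R)=\{x\in\mathbb{B}^n:h_{\mathbb{B}^n}(x,c)=R\}$. Then $S_h(c,R)$ is an ellipsoid of revolution with center \[ c'=\frac{c}{\mathrm{ch}^2(R/2)-|c|^2\,\mathrm{sh}^2(R/2)}, \] whose semi-axis in the direction of $c$ (the minor semi-axis) equals \[ a_{\min}=\frac12\,\frac{(1-|c|^2)\,\mathrm{sh}(R)}{\mathrm{ch}^2(R/2)-|c|^2\,\mathrm{sh}^2(R/2)} \] and every other semi-axis equals \[ a_{\max}=\frac{\mathrm{sh}(R/2)\sqrt{1-|c|^2}}{\sqrt{\mathrm{ch}^2(R/2)-|c|^2\,\mathrm{sh}^2(R/2)}}. \] If $c=0$, then $S_h(c,R)$ is the Euclidean sphere centered at $0$ with radius $\mathrm{th}(R/2)$.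
   Context: Hilbert metric: for distinct $x,y$ in a bounded convex domain $G\subset\mathbb{R}^n$, let $u,v$ be the intersection points of the line through $x,y$ with $\partial G$, ordered $u,x,y,v$ on the line; $h_G(x,y)=\log\frac{|u-y||x-v|}{|u-x||y-v|}$. $\mathrm{sh},\mathrm{ch},\mathrm{th}$ denote the hyperbolic sine, cosine and tangent. *)

(* Defs.v *)
From HB Require Import structures.
From mathcomp Require Import all_boot all_order all_algebra.
From mathcomp Require Import all_classical all_reals all_analysis.
Set Implicit Arguments. Unset Strict Implicit. Unset Printing Implicit Defensive.
Import Order.TTheory GRing.Theory Num.Theory.
Local Open Scope classical_set_scope.
Local Open Scope ring_scope.

Definition dotv {R : realType} {n : nat} (u v : 'rV[R]_n) : R :=
  \sum_(i < n) u 0 i * v 0 i.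
Definition enorm {R : realType} {n : nat} (u : 'rV[R]_n) : R :=
  Num.sqrt (dotv u u).

Definition sh {R : realType} (x : R) : R := (expR x - expR (- x)) / 2.
Definition ch {R : realType} (x : R) : R := (expR x + expR (- x)) / 2.
Definition th {R : realType} (x : R) : R := sh x / ch x.

Definition unit_ball (R : realType) (n : nat) : set 'rV[R]_n :=
  [set x | enorm x < 1].
Definition unit_sphere (R : realType) (n : nat) : set 'rV[R]_n :=
  [set x | enorm x = 1].
Arguments unit_ball : clear implicits.
Arguments unit_sphere : clear implicits.

(* d is the Hilbert distance value for distinct x, y of the unit ball:
   u, v are the intersection points of the line through x, y with the
   boundary, ordered u, x, y, v on the line (u = x + s (y - x), s < 0;
   v = x + t (y - x), t > 1). *)
Definition hilbert_ball_value {R : realType} {n : nat} (x y : 'rV[R]_n) (d : R) :=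
  exists (u v : 'rV[R]_n) (s t : R),
    s < 0 /\ 1 < t /\ u = x + s *: (y - x) /\ v = x + t *: (y - x) /\
        u \in unit_sphere R n /\ v \in unit_sphere R n /\
        d = ln ((enorm (u - y) * enorm (x - v)) / (enorm (u - x) * enorm (y - v))).

(* Hilbert distance h_{B^n}(x, y) (0 when x = y). Outside the ball it is
   irrelevant (junk value). *)
Definition hilbert_ball {R : realType} {n : nat} (x y : 'rV[R]_n) : R :=
  if x == y then 0 else xget 0 [set d | hilbert_ball_value x y d].

Definition hilbert_sphere {R : realType} {n : nat} (c : 'rV[R]_n) (r : R) : set 'rV[R]_n :=
  [set x | x \in unit_ball R n /\ hilbert_ball x c = r].

(* Ellipsoid of revolution with center c0, unit symmetry axis e, semi-axis
   a along e and semi-axis b in every direction orthogonal to e. *)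
Definition ellipsoid_rev {R : realType} {n : nat} (c0 e : 'rV[R]_n) (a b : R)
  : set 'rV[R]_n :=
  [set x | (dotv (x - c0) e) ^+ 2 / a ^+ 2
           + (enorm (x - c0) ^+ 2 - (dotv (x - c0) e) ^+ 2) / b ^+ 2 = 1].

Definition esphere {R : realType} {n : nat} (c0 : 'rV[R]_n) (r : R) : set 'rV[R]_n :=
  [set x | enorm (x - c0) = r].

(* Main.v *)
Require Import Defs.
From HB Require Import structures.
From mathcomp Require Import all_boot all_order all_algebra.
From mathcomp Require Import all_classical all_reals all_analysis.
From mathcomp Require Import ring lra.
Import Order.TTheory GRing.Theory Num.Theory.
Local Open Scope classical_set_scope.
Local Open Scope ring_scope.




Section Vec.
Variables (R : realType) (n : nat).
Implicit Types (u v w x y : 'rV[R]_n).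

Lemma dotvC u v : dotv u v = dotv v u.
Proof. by apply: eq_bigr => i _; rewrite mulrC. Qed.

Lemma dotvDl u v w : dotv (u + v) w = dotv u w + dotv v w.
Proof. by rewrite /dotv -big_split; apply: eq_bigr => i _; rewrite !mxE mulrDl. Qed.

Lemma dotvZl k u v : dotv (k *: u) v = k * dotv u v.
Proof. by rewrite /dotv mulr_sumr; apply: eq_bigr => i _; rewrite !mxE mulrA. Qed.

Lemma dotvDr u v w : dotv w (u + v) = dotv w u + dotv w v.
Proof. by rewrite dotvC dotvDl !(dotvC w). Qed.

Lemma dotvZr k u v : dotv v (k *: u) = k * dotv v u.
Proof. by rewrite dotvC dotvZl dotvC. Qed.

Lemma dotv_ge0 u : 0 <= dotv u u.
Proof. by apply: sumr_ge0 => i _; rewrite -expr2 sqr_ge0. Qed.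

Lemma dotv_eq0 u : dotv u u = 0 -> u = 0.
Proof.
move=> h; apply/rowP => j; rewrite mxE.
have hp : forall i : 'I_n, true -> 0 <= u 0 i * u 0 i.
  by move=> i _; rewrite -expr2 sqr_ge0.
have := psumr_eq0P hp h (i:=j) isT.
by move=> /eqP; rewrite mulf_eq0 orbb => /eqP.
Qed.

Lemma enorm_sqr u : enorm u ^+ 2 = dotv u u.
Proof. by rewrite /enorm sqr_sqrtr // dotv_ge0. Qed.

Lemma enorm_ge0 u : 0 <= enorm u.
Proof. exact: sqrtr_ge0. Qed.

Lemma enormZ k u : enorm (k *: u) = `|k| * enorm u.
Proof. by rewrite /enorm dotvZl dotvZr mulrA -expr2 sqrtrM ?sqr_ge0 // sqrtr_sqr. Qed.

Lemma dotv_exp x w s :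
  dotv (x + s *: w) (x + s *: w) = dotv x x + 2 * s * dotv x w + s ^+ 2 * dotv w w.
Proof.
rewrite !dotvDl !dotvDr !dotvZl !dotvZr (dotvC w x); ring.
Qed.

Lemma dotv_lin x c a b : dotv (x + a *: c) (b *: c) = b * (dotv x c + a * dotv c c).
Proof. rewrite dotvZr dotvDl dotvZl; ring. Qed.

Lemma cauchy_schwarz x c : dotv x c ^+ 2 <= dotv x x * dotv c c.
Proof.
have [c0|cn0] := eqVneq c 0.
  have z : forall v, dotv v (0:'rV[R]_n) = 0.
    by move=> v; rewrite -(scale0r (0:'rV[R]_n)) dotvZr mul0r.
  by rewrite c0 !z expr0n mulr0.
have hc : 0 < dotv c c.
  rewrite lt_neqAle dotv_ge0 andbT; apply/eqP => h; move/eqP: cn0; apply.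
  by apply: dotv_eq0.
have := dotv_ge0 (x + (- (dotv x c / dotv c c)) *: c).
rewrite dotv_exp => h.
have e : dotv x x + 2 * - (dotv x c / dotv c c) * dotv x c +
   (- (dotv x c / dotv c c)) ^+ 2 * dotv c c = dotv x x - dotv x c ^+ 2 / dotv c c.
  by field; rewrite gt_eqF.
rewrite e subr_ge0 ler_pdivrMr // in h.
Qed.

End Vec.



Section Scal.
Variable R : realType.

Lemma scalar_hb (A B X s t : R) : 0 < A -> s < 0 -> 1 < t ->
  X + 2 * s * B + s ^+ 2 * A = 1 -> X + 2 * t * B + t ^+ 2 * A = 1 ->
  let Q := (1 - s) * t / ((- s) * (t - 1)) in
  Q + Q^-1 + 2 = 4 * (1 - (X + B)) ^+ 2 / ((1 - X) * (1 - (X + 2 * B + A))).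
Proof.
move=> hA hs ht e1 e2 Q.
have hst : s - t != 0 by rewrite subr_eq0 lt_eqF //; lra.
have hB : 2 * B = - A * (s + t).
  have : (s - t) * (2 * B + A * (s + t)) = 0.
    transitivity ((X + 2 * s * B + s ^+ 2 * A) - (X + 2 * t * B + t ^+ 2 * A)); first ring.
    by rewrite e1 e2 subrr.
  move/eqP; rewrite mulf_eq0 (negbTE hst) /= => /eqP h.
  by rewrite mulNr; apply/eqP; rewrite -addr_eq0 h.
have hX : X = 1 + A * s * t.
  by rewrite -e1 mulrAC hB; ring.
have -> : B = - A * (s + t) / 2 by rewrite -hB; field.
rewrite hX /Q.
have s0 : s != 0 by rewrite lt_eqF.
have t0 : t != 0 by rewrite gt_eqF //; lra.
have t1 : t - 1 != 0 by rewrite gt_eqF //; lra.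
have s1 : 1 - s != 0 by rewrite gt_eqF //; lra.
have A0 : A != 0 by rewrite gt_eqF.
field.
rewrite t1 s0 t0 s1 !andbT.
have -> : 1 - (1 + A * s * t + - A * (s + t) + A) = - A * (s - 1) * (t - 1) by ring.
have -> : 1 - (1 + A * s * t) = - A * s * t by ring.
have s1' : s - 1 != 0 by rewrite lt_eqF //; lra.
by rewrite !mulf_neq0 // oppr_eq0.
Qed.

End Scal.



Section Scal.
Variable R : realType.

Lemma ell_scalar (p X m S C : R) : 0 < m -> m < 1 -> C ^+ 2 - S ^+ 2 = 1 -> 0 < S ->
  let D := C ^+ 2 - m ^+ 2 * S ^+ 2 in
  let al := m^-1 * (p + (- D^-1) * m ^+ 2) in
  let N := X + 2 * (- D^-1) * p + (- D^-1) ^+ 2 * m ^+ 2 in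
  al ^+ 2 / (2^-1 * ((1 - m ^+ 2) * (2 * S * C)) / D) ^+ 2
    + (N - al ^+ 2) / (S ^+ 2 * (1 - m ^+ 2) / D) = 1
  <-> (1 - p) ^+ 2 = C ^+ 2 * (1 - X) * (1 - m ^+ 2).
Proof.
move=> hm0 hm1 hCS hS D al N.
have hK : C ^+ 2 = 1 + S ^+ 2 by lra.
have hP : 1 - m ^+ 2 != 0.
  by rewrite gt_eqF // subr_gt0 expr_lt1 // ltW.
have hD : D = 1 + S ^+ 2 * (1 - m ^+ 2) by rewrite /D hK; ring.
have hD0 : D != 0.
  rewrite hD gt_eqF // ltr_pwDl // mulr_ge0 // ?sqr_ge0 // subr_ge0 expr_le1 // ltW //.
have hS0 : S != 0 by rewrite gt_eqF.
have hC : C != 0.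
  apply/eqP => c0; move: hK; rewrite c0 expr0n /= => h0.
  have : 0 < 1 + S ^+ 2 by rewrite ltr_pwDl // sqr_ge0.
  by rewrite -h0 ltxx.
have hm : m != 0 by rewrite gt_eqF.
have -> : (2^-1 * ((1 - m ^+ 2) * (2 * S * C)) / D) ^+ 2
   = (1 - m ^+ 2) ^+ 2 * S ^+ 2 * C ^+ 2 / D ^+ 2 by field.
set F := D / ((1 - m ^+ 2) ^+ 2 * C ^+ 2 * S ^+ 2).
have key : al ^+ 2 / ((1 - m ^+ 2) ^+ 2 * S ^+ 2 * C ^+ 2 / D ^+ 2)
    + (N - al ^+ 2) / (S ^+ 2 * (1 - m ^+ 2) / D) - 1
    = F * ((1 - p) ^+ 2 - C ^+ 2 * (1 - X) * (1 - m ^+ 2)).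
  rewrite /F /al /N /D hK.
  field.
  rewrite hS0 hP hm /= andbT.
  apply/andP; split.
    by have := expf_neq0 2 hC; rewrite hK.
  suff -> : 1 + S ^+ 2 - (m * S) ^+ 2 = D by [].
  by rewrite hD; ring.
have hF : F != 0.
  by rewrite /F mulf_neq0 // invr_eq0 !mulf_neq0 // ?expf_neq0.
split => h.
  move: key; rewrite h subrr => /esym /eqP; rewrite mulf_eq0 (negbTE hF) /= subr_eq0.
  by move/eqP.
by apply/eqP; rewrite -subr_eq0 key h subrr mulr0.
Qed.
End Scal.



Section Hyp.
Variable R : realType.

Lemma hyp (r : R) : 0 < r ->
  [/\ ch (r / 2) ^+ 2 - sh (r / 2) ^+ 2 = 1, 0 < sh (r / 2), 0 < ch (r / 2),
      sh r = 2 * sh (r / 2) * ch (r / 2)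
    & expR r + (expR r)^-1 + 2 = 4 * ch (r / 2) ^+ 2].
Proof.
move=> hr.
have eE : expR r = expR (r / 2) * expR (r / 2) by rewrite -expRD -splitr.
have E1 : 1 < expR (r / 2) by rewrite expR_gt1 divr_gt0.
have E0 : expR (r / 2) != 0 by rewrite gt_eqF // expR_gt0.
rewrite /sh /ch !expRN eE.
split.
- by field.
- rewrite divr_gt0 // subr_gt0; apply: (lt_trans _ E1).
  by rewrite invf_lt1 ?expR_gt0.
- by rewrite divr_gt0 // ltr_wpDr ?invr_ge0 ?expR_ge0 ?expR_gt0.
- by field.
- by field.
Qed.

Lemma cosh_inj (Q E : R) : 1 < Q -> 1 < E -> Q + Q^-1 = E + E^-1 -> Q = E.
Proof.
move=> hQ hE h.
have Q0 : Q != 0 by rewrite gt_eqF //; lra.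
have E0 : E != 0 by rewrite gt_eqF //; lra.
have : (Q - E) * (Q * E - 1) = 0.
  have -> : (Q - E) * (Q * E - 1) = Q * E * ((Q + Q^-1) - (E + E^-1)) by field; rewrite ?Q0 ?E0.
  by rewrite h subrr mulr0.
move/eqP; rewrite mulf_eq0 => /orP [/eqP|/eqP h2].
  by move/eqP; rewrite subr_eq0 => /eqP.
exfalso; have : 1 < Q * E by rewrite -(mulr1 1) ltr_pM //; lra.
by rewrite -subr_gt0 h2 ltxx.
Qed.
End Hyp.



Section HB.
Variables (R : realType) (n : nat).
Implicit Types (u v w x y : 'rV[R]_n).

Lemma dotvv_gt0 w : w != 0 -> 0 < dotv w w.
Proof.
move=> w0; rewrite lt_neqAle dotv_ge0 andbT; apply/eqP => h.
by move/eqP: w0; apply; apply: dotv_eq0.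
Qed.

Lemma dotv_y x y : dotv x y = dotv x x + dotv x (y - x).
Proof. by rewrite -dotvDr addrC subrK. Qed.

Lemma dotv_yy x y : dotv y y = dotv x x + 2 * dotv x (y - x) + dotv (y - x) (y - x).
Proof.
have {1 2}-> : y = x + 1 *: (y - x) by rewrite scale1r addrC subrK.
by rewrite dotv_exp expr1n mulr1 mul1r.
Qed.

Lemma sphere_dot u : u \in unit_sphere R n -> dotv u u = 1.
Proof. by rewrite in_setE /unit_sphere /= => h; rewrite -enorm_sqr h expr1n. Qed.

Lemma hbv_prop x y d : x != y -> hilbert_ball_value x y d ->
  0 < d /\ expR d + (expR d)^-1 + 2
           = 4 * (1 - dotv x y) ^+ 2 / ((1 - dotv x x) * (1 - dotv y y)).
Proof.
move=> xy [u [v [s [t [hs [ht [hu [hv [su [sv ->]]]]]]]]]].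
have w0 : y - x != 0 by rewrite subr_eq0 eq_sym.
have hA : 0 < dotv (y - x) (y - x) by apply: dotvv_gt0.
have e1 := sphere_dot _ su; have e2 := sphere_dot _ sv.
rewrite hu dotv_exp in e1; rewrite hv dotv_exp in e2.
have -> : u - y = (s - 1) *: (y - x) by rewrite hu; apply/rowP => i; rewrite !mxE; ring.
have -> : x - v = (- t) *: (y - x) by rewrite hv; apply/rowP => i; rewrite !mxE; ring.
have -> : u - x = s *: (y - x) by rewrite hu; apply/rowP => i; rewrite !mxE; ring.
have -> : y - v = (1 - t) *: (y - x) by rewrite hv; apply/rowP => i; rewrite !mxE; ring.
rewrite !enormZ.
rewrite (ltr0_norm hs) (normrN t) (gtr0_norm (_ : 0 < t)); last by lra.
rewrite (ltr0_norm (_ : s - 1 < 0)); last by lra.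
rewrite (ltr0_norm (_ : 1 - t < 0)); last by lra.
have hW : 0 < enorm (y - x) by rewrite /enorm sqrtr_gt0.
have W0 : enorm (y - x) != 0 by rewrite gt_eqF.
have s0 : s != 0 by rewrite lt_eqF.
have t1 : t - 1 != 0 by rewrite gt_eqF //; lra.
set Q := (1 - s) * t / ((- s) * (t - 1)).
have -> : - (s - 1) * enorm (y - x) * (t * enorm (y - x)) /
     (- s * enorm (y - x) * (- (1 - t) * enorm (y - x))) = Q.
  have t1' : 1 - t != 0 by rewrite lt_eqF //; lra.
  by rewrite /Q; field; rewrite t1 s0 W0 t1'.
have hQ : 1 < Q.
  have -> : Q = 1 + (t - s) / ((- s) * (t - 1)) by rewrite /Q; field; rewrite s0 t1.
  rewrite ltr_pwDr // divr_gt0 //; first by lra.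
  by rewrite mulr_gt0 //; lra.
rewrite lnK; last by rewrite posrE; lra.
split; first exact: ln_gt0.
rewrite (dotv_y x y) (dotv_yy x y).
exact: scalar_hb e1 e2.
Qed.

Lemma hbv_exists x y : dotv x x < 1 -> dotv y y < 1 -> x != y ->
  exists d, hilbert_ball_value x y d.
Proof.
move=> hx hy xy.
have w0 : y - x != 0 by rewrite subr_eq0 eq_sym.
have hA : 0 < dotv (y - x) (y - x) by apply: dotvv_gt0.
set A := dotv (y - x) (y - x) in hA *.
set B := dotv x (y - x).
set C := dotv x x - 1.
have hC : C < 0 by rewrite /C; lra.
have hY := dotv_yy x y; rewrite -/A -/B in hY.
have hY1 : A + 2 * B + C < 0 by rewrite /C; lra.
have hdisc : 0 <= B ^+ 2 - A * C by nra.
set q := Num.sqrt (B ^+ 2 - A * C).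
have hq : q ^+ 2 = B ^+ 2 - A * C by rewrite sqr_sqrtr.
have hq0 : 0 <= q by apply: sqrtr_ge0.
set s := (- B - q) / A.
set t := (- B + q) / A.
have A0 : A != 0 by rewrite gt_eqF.
have hs : s < 0.
  rewrite /s pmulr_llt0 ?invr_gt0 //.
  have : B ^+ 2 < q ^+ 2 by rewrite hq; nra.
  nra.
have ht : 1 < t.
  rewrite /t ltr_pdivlMr // mul1r.
  have : (A + B) ^+ 2 < q ^+ 2 by rewrite hq; nra.
  nra.
have quad : forall z, z = (- B - q) / A \/ z = (- B + q) / A ->
    dotv x x + 2 * z * B + z ^+ 2 * A = 1.
  move=> z hz.
  have -> : dotv x x = C + 1 by rewrite /C; ring.
  suff : C + 2 * z * B + z ^+ 2 * A = 0 by move=> h; rewrite -[RHS]add0r -h; ring.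
  move: hq hz A0; clear s t hs ht; clearbody q A B C => hq hz A0.
  case: hz => ->.
    have -> : C + 2 * ((- B - q) / A) * B + ((- B - q) / A) ^+ 2 * A
       = (q ^+ 2 - (B ^+ 2 - A * C)) / A by field.
    by rewrite hq subrr mul0r.
  have -> : C + 2 * ((- B + q) / A) * B + ((- B + q) / A) ^+ 2 * A
     = (q ^+ 2 - (B ^+ 2 - A * C)) / A by field.
  by rewrite hq subrr mul0r.
eexists; exists (x + s *: (y - x)), (x + t *: (y - x)), s, t.
do 4 (split => //).
have sph : forall z, dotv x x + 2 * z * B + z ^+ 2 * A = 1 ->
    x + z *: (y - x) \in unit_sphere R n.
  move=> z hz; rewrite in_setE /unit_sphere /= /enorm dotv_exp -/A -/B hz.
  exact: sqrtr1.
split; first by apply: sph; apply: quad; left.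
split; first by apply: sph; apply: quad; right.
by [].

Qed.

End HB.



Section Main.
Variables (R : realType) (n : nat).
Implicit Types (u v w x y c : 'rV[R]_n).

Lemma hb_val x y : dotv x x < 1 -> dotv y y < 1 -> x != y ->
  0 < hilbert_ball x y /\ expR (hilbert_ball x y) + (expR (hilbert_ball x y))^-1 + 2
           = 4 * (1 - dotv x y) ^+ 2 / ((1 - dotv x x) * (1 - dotv y y)).
Proof.
move=> hx hy xy; rewrite /hilbert_ball (negbTE xy).
case: xgetP => [d _ hd|hnone]; first by apply: hbv_prop hd.
have [d hd] : exists d, hilbert_ball_value x y d by apply: hbv_exists.
by case: (hnone d).
Qed.

Lemma key x c r : dotv c c < 1 -> 0 < r ->
  (dotv x x < 1 /\ hilbert_ball x c = r) <->
  (1 - dotv x c) ^+ 2 = ch (r / 2) ^+ 2 * (1 - dotv x x) * (1 - dotv c c).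
Proof.
move=> hc hr.
have [hCS hS hC hsh hE] := hyp _ r hr.
have hK : 1 < ch (r / 2) ^+ 2.
  have := exprn_gt0 2 hS; lra.
have hc0 : 0 <= dotv c c by apply: dotv_ge0.
split.
  move=> [hx hb].
  have [xc|xc] := eqVneq x c.
    by move: hb; rewrite /hilbert_ball xc eqxx => r0; move: hr; rewrite -r0 ltxx.
  have [_ h] := hb_val x c hx hc xc.
  move: h; rewrite hb hE => h.
  have hx0 : 1 - dotv x x != 0 by rewrite gt_eqF // subr_gt0.
  have hc1 : 1 - dotv c c != 0 by rewrite gt_eqF // subr_gt0.
  have : ch (r / 2) ^+ 2 = (1 - dotv x c) ^+ 2 / ((1 - dotv x x) * (1 - dotv c c)).
    have h4 : (4 : R) != 0 by [].
    by apply: (mulfI h4); rewrite h -mulrA.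
  move=> ->; field; by rewrite hx0 hc1.
move=> h.
have cs : dotv x c ^+ 2 <= dotv x x * dotv c c by apply: cauchy_schwarz.
have hx : dotv x x < 1.
  have hle : dotv x x <= 1.
    rewrite -subr_ge0; have : 0 <= (1 - dotv x c) ^+ 2 by apply: sqr_ge0.
    rewrite h => h2.
    have h3 : 0 < ch (r / 2) ^+ 2 * (1 - dotv c c) by rewrite mulr_gt0 ?subr_gt0 //; lra.
    by rewrite -(pmulr_rge0 _ h3) mulrAC.
  rewrite lt_neqAle hle andbT; apply/eqP => x1.
  move: h; rewrite x1 subrr mulr0 mul0r => /eqP; rewrite sqrf_eq0 subr_eq0 => /eqP p1.
  by move: cs; rewrite -p1 x1 expr1n mul1r; lra.
split => //.
have [xc|xc] := eqVneq x c.
  exfalso; move: h; rewrite xc => h.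
  have hc1 : 0 < (1 - dotv c c) ^+ 2 by rewrite exprn_gt0 // subr_gt0.
  have : (1 - dotv c c) ^+ 2 = ch (r / 2) ^+ 2 * (1 - dotv c c) ^+ 2 by rewrite [LHS]h; ring.
  nra.
have [hpos hv] := hb_val x c hx hc xc.
apply: expR_inj; apply: cosh_inj; first by rewrite expR_gt1.
  by rewrite expR_gt1.
apply: (addIr 2); rewrite hv hE h.
have hx0 : 1 - dotv x x != 0 by rewrite gt_eqF // subr_gt0.
have hc1 : 1 - dotv c c != 0 by rewrite gt_eqF // subr_gt0.
by field; rewrite hx0 hc1.
Qed.

End Main.



Lemma ball_dot (R : realType) (n : nat) (x : 'rV[R]_n) :
  (x \in unit_ball R n) <-> dotv x x < 1.
Proof.
rewrite in_setE /unit_ball /= -enorm_sqr.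
have h0 := @enorm_ge0 _ _ x.
split => h.
  by rewrite expr_lt1.
rewrite ltNge; apply/negP => h1.
have : 1 <= enorm x ^+ 2 by rewrite expr_ge1.
by rewrite leNgt h.
Qed.

Theorem theorem4p3 (R : realType) (n : nat) (c : 'rV[R]_n) (r : R) :
  c \in unit_ball R n -> 0 < r ->
  let D := ch (r / 2) ^+ 2 - enorm c ^+ 2 * sh (r / 2) ^+ 2 in
  let c' := D^-1 *: c in
  let amin := 2^-1 * ((1 - enorm c ^+ 2) * sh r) / D in
  let amax := sh (r / 2) * Num.sqrt (1 - enorm c ^+ 2) / Num.sqrt D in
  (c != 0 ->
     hilbert_sphere c r = ellipsoid_rev c' ((enorm c)^-1 *: c) amin amax)
  /\ (c = 0 -> hilbert_sphere c r = esphere 0 (th (r / 2))).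
Proof.
move=> hcb hr D c' amin amax.
have hc := (ball_dot _ _ c).1 hcb.
have [hCS hS hC hsh hE] := hyp _ r hr.
have hm2 : dotv c c = enorm c ^+ 2 by rewrite enorm_sqr.
have hm1 : enorm c < 1 by move/ball_dot: hcb; rewrite -enorm_sqr expr_lt1 // enorm_ge0.
have hm0 := @enorm_ge0 _ _ c.
split.
  move=> cn0.
  have hmp : 0 < enorm c.
    rewrite lt_neqAle hm0 andbT; apply/eqP => /esym e0.
    by move: cn0; rewrite (@dotv_eq0 _ _ c) ?eqxx // hm2 e0 expr0n.
  apply/funext => x; apply/propext.
  rewrite /hilbert_sphere /ellipsoid_rev /=.
  rewrite ball_dot (@key _ _ x c r hc hr).
  have -> : x - c' = x + (- D^-1) *: c by rewrite /c' scaleNr.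
  rewrite dotv_lin enorm_sqr dotv_exp hm2.
  have hD : 0 < D.
    rewrite /D; have : enorm c ^+ 2 < 1 by rewrite expr_lt1.
    have := exprn_gt0 2 hS; nra.
  have -> : amax ^+ 2 = sh (r / 2) ^+ 2 * (1 - enorm c ^+ 2) / D.
    rewrite /amax expr_div_n exprMn !sqr_sqrtr ?(ltW hD) //.
    - exact: dotv_ge0.
    - by rewrite subr_ge0 ltW.
    - exact: dotv_ge0.
  rewrite /amin hsh.
  rewrite -(@ell_scalar _ (dotv x c) (dotv x x) _ _ _ hmp hm1 hCS hS).
  by [].
move=> c0.
apply/funext => x; apply/propext.
rewrite /hilbert_sphere /esphere /=.
rewrite ball_dot (@key _ _ x c r hc hr) c0 subr0.
have z : forall v, dotv v (0:'rV[R]_n) = 0.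
  by move=> v; rewrite -(scale0r (0:'rV[R]_n)) dotvZr mul0r.
rewrite !z subr0 expr1n mulr1 /th.
have C0 : ch (r / 2) != 0 by rewrite gt_eqF.
have hX : forall X : R, (1 = ch (r / 2) ^+ 2 * (1 - X)) <-> (X = (sh (r / 2) / ch (r / 2)) ^+ 2).
  move=> X; split => h.
    rewrite expr_div_n.
    have -> : sh (r / 2) ^+ 2 = X * ch (r / 2) ^+ 2 by move: h hCS; nra.
    by field.
  rewrite h.
  have -> : ch (r / 2) ^+ 2 * (1 - (sh (r / 2) / ch (r / 2)) ^+ 2)
     = ch (r / 2) ^+ 2 - sh (r / 2) ^+ 2 by field.
  by rewrite hCS.
rewrite hX -enorm_sqr.
have hth : 0 <= sh (r / 2) / ch (r / 2) by rewrite divr_ge0 // ltW.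
split => h.
  by rewrite -(ger0_norm (@enorm_ge0 _ _ x)) -(ger0_norm hth) -!sqrtr_sqr h.
by rewrite h.
Qed.
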